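(* For any $n\geq 1$, $b\geq 2$ and even, $R_n(b)$ listed in co-Reflected Gray Code Order is a $3$-adjacent Gray code.
   Context: A restricted growth function of length $n$ is an integer sequence $s_1s_2\ldots s_n$ with $s_1=0$ and $0\leq s_{i+1}\leq \max\{s_j\}_{j=1}^i+1$ for $1\leq i\leq n-1$; $R_n$ is the set of these, and for $b\geq1$, $R_n(b)=\{s_1\ldots s_n\in R_n : \max\{s_i\}_{i=1}^n\leq b\}$. The co-Reflected Gray Code Order on $\{0,1,\ldots,m-1\}^n$ ($m\geq2$) is defined by: $s_1\ldots s_n$ is less than $t_1\ldots t_n$ if, for the position $k$ with $s_i=t_i$ ($1\leq i\leq k-1$) and $s_k\neq t_k$, either $U_k$ is even and $s_k<t_k$, or $U_k$ is odd and $s_k>t_k$, where $U_k=|\{i\in\{1,\ldots,k-1\}: s_i\neq0,\ s_i \text{ even}\}|$. A list of same-length sequences is a $d$-adjacent Gray code if successive sequences differ in at most $d$ positions and these positions are adjacent. *)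

(* Defs.v *)
From mathcomp Require Import all_boot.
Set Implicit Arguments. Unset Strict Implicit. Unset Printing Implicit Defensive.

(* Sequences s_1 ... s_n are represented as [seq nat] (index i-1 = s_i). *)

Fixpoint rgf_aux (m : nat) (s : seq nat) : bool :=
  match s with
  | [::] => true
  | x :: s' => (x <= m.+1) && rgf_aux (maxn m x) s'
  end.

Definition is_rgf (s : seq nat) : bool :=
  match s with
  | [::] => true
  | x :: s' => (x == 0) && rgf_aux 0 s'
  end.

Definition in_Rnb (n b : nat) (s : seq nat) : bool :=
  [&& size s == n, is_rgf s & all (fun x => x <= b) s].

Fixpoint all_words (m n : nat) : seq (seq nat) :=
  match n with
  | 0 => [:: [::]]
  | n'.+1 => [seq x :: w | x <- iota 0 m, w <- all_words m n']
  end.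

Definition Rnb (n b : nat) : seq (seq nat) :=
  [seq s <- all_words b.+1 n | in_Rnb n b s].

(* co-Reflected Gray Code order: u = U_k, number of earlier nonzero even entries *)
Fixpoint colt_aux (u : nat) (s t : seq nat) : bool :=
  match s, t with
  | x :: s', y :: t' =>
      if x == y then colt_aux (u + ((x != 0) && ~~ odd x)) s' t'
      else if ~~ odd u then x < y else y < x
  | _, _ => false
  end.

Definition colt (s t : seq nat) : bool := colt_aux 0 s t.
Definition cole (s t : seq nat) : bool := (s == t) || colt s t.

Definition coRGC_list (n b : nat) : seq (seq nat) := sort cole (Rnb n b).

Definition diff_pos (s t : seq nat) : seq nat :=
  [seq i <- iota 0 (maxn (size s) (size t)) | nth 0 s i != nth 0 t i].

Definition d_adjacent_step (d : nat) (s t : seq nat) : bool :=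
  let D := diff_pos s t in (size D <= d) && (D == iota (head 0 D) (size D)).

Definition d_adjacent_gray (d : nat) (L : seq (seq nat)) : Prop :=
  forall i, i.+1 < size L -> d_adjacent_step d (nth [::] L i) (nth [::] L i.+1).

(* Main.v *)
Require Import Defs.
From mathcomp Require Import all_boot zify.
Set Implicit Arguments. Unset Strict Implicit. Unset Printing Implicit Defensive.

Lemma colt_asym u s t : colt_aux u s t -> colt_aux u t s -> False.
Proof.
elim: s u t => [|x s IH] u [|y t] //=.
rewrite eq_sym; case: eqP => [->|ne]; first exact: IH.
case: (odd u) => /=; lia.
Qed.

Lemma colt_irr u s : colt_aux u s s = false.
Proof. elim: s u => [|x s IH] u //=; by rewrite eqxx IH. Qed.

Lemma colt_trans u s t r : colt_aux u s t -> colt_aux u t r -> colt_aux u s r.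
Proof.
elim: s u t r => [|x s IH] u [|y t] [|z r] //=.
case: (eqVneq x y) => [exy|nxy]; case: (eqVneq y z) => [eyz|nyz].
- subst; rewrite !eqxx; exact: IH.
- subst; rewrite (negbTE nyz) => _; done.
- by subst; rewrite (negbTE nxy).
- idtac.
  case: (eqVneq x z) => [exz|nxz]; first by subst; case: (odd u) => /=; lia.
  case: (odd u) => /=; lia.
Qed.

Lemma colt_total u s t : size s = size t -> s != t -> colt_aux u s t || colt_aux u t s.
Proof.
elim: s u t => [|x s IH] u [|y t] //= [] Hs.
rewrite eqseq_cons eq_sym; case: (eqVneq y x) => [->|nyx] /=.
  exact: IH.
move=> _; case: (odd u) => /=; lia.
Qed.

Lemma cole_trans : transitive cole.
Proof.
move=> t s r /orP[/eqP->//|H1] /orP[/eqP<-|H2]; apply/orP; right => //.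
exact: colt_trans H1 H2.
Qed.

Lemma cole_anti : antisymmetric cole.
Proof.
move=> s t /andP[/orP[/eqP->//|H1] /orP[/eqP->//|H2]].
by case: (colt_asym H1 H2).
Qed.

Definition ev (x : nat) : bool := (x != 0) && ~~ odd x.
Definition top (b m : nat) := minn m.+1 b.
Definition xs (b m u : nat) : seq nat :=
  if odd u then rev (iota 0 (top b m).+1) else iota 0 (top b m).+1.

Definition blk (x : nat) (G : seq (seq nat)) := [seq x :: w | w <- G].

Fixpoint gen (b m u k : nat) : seq (seq nat) :=
  match k with
  | 0 => [:: [::]]
  | k'.+1 => flatten [seq blk x (gen b (maxn m x) (u + ev x) k') | x <- xs b m u]
  end.

Fixpoint F (b m u k : nat) : seq nat :=
  match k with
  | 0 => [::]
  | k'.+1 => let x := if odd u then top b m else 0 in x :: F b (maxn m x) (u + ev x) k'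
  end.

Lemma xs_nil b m u : xs b m u != [::].
Proof. by rewrite /xs; case: odd => //; rewrite -size_eq0 ?size_rev size_iota. Qed.

Lemma gen_nil b m u k : gen b m u k != [::].
Proof.
elim: k m u => [|k IH] m u //=.
case E: (xs b m u) (xs_nil b m u) => [|x xs'] //= _.
by case H: (gen _ _ _ _) (IH (maxn m x) (u + ev x)).
Qed.

Lemma head_flat (B : nat -> seq (seq nat)) l :
  (forall x, B x != [::]) -> l != [::] -> head [::] (flatten (map B l)) = head [::] (B (head 0 l)).
Proof.
move=> HB; case: l => [|x l] //= _; by case: (B x) (HB x).
Qed.

Lemma last_ne (s : seq (seq nat)) d d' : s != [::] -> last d s = last d' s.
Proof. by case: s. Qed.

Lemma last_flat (B : nat -> seq (seq nat)) l :
  (forall x, B x != [::]) -> l != [::] -> last [::] (flatten (map B l)) = last [::] (B (last 0 l)).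
Proof.
move=> HB; case: l => [|x l] //= _.
elim: l x => [|y l IH] x /=; first by rewrite cats0.
rewrite last_cat -IH; apply: last_ne.
by case: (B y) (HB y).
Qed.

Lemma head_blk x G : G != [::] -> head [::] (blk x G) = x :: head [::] G.
Proof. by case: G. Qed.

Lemma last_blk x G : G != [::] -> last [::] (blk x G) = x :: last [::] G.
Proof. case: G => [|a G] //= _. exact: (last_map (cons x) G a). Qed.

Lemma blk_nil x G : G != [::] -> blk x G != [::].
Proof. by case: G. Qed.

Lemma iota_last t : last 0 (iota 0 t.+1) = t.
Proof. by rewrite -addn1 iotaD last_cat. Qed.

Lemma rev_iota t : rev (iota 0 t.+1) = t :: rev (iota 0 t).
Proof. by rewrite -addn1 iotaD rev_cat. Qed.

Lemma xs_head b m u : head 0 (xs b m u) = if odd u then top b m else 0.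
Proof. by rewrite /xs; case: odd => //; rewrite rev_iota. Qed.

Lemma xs_last b m u : last 0 (xs b m u) = if odd u then 0 else top b m.
Proof.
rewrite /xs; case: odd; last exact: iota_last.
by rewrite /= rev_cons last_rcons.
Qed.

Lemma gen_head b m u k : head [::] (gen b m u k) = F b m u k.
Proof.
elim: k m u => [|k IH] m u //=.
rewrite head_flat ?xs_nil // => [|x]; last by apply: blk_nil; apply: gen_nil.
by rewrite head_blk ?gen_nil // IH xs_head.
Qed.

Lemma gen_last b m u k : last [::] (gen b m u k) = F b m u.+1 k.
Proof.
elim: k m u => [|k IH] m u //=.
rewrite last_flat ?xs_nil // => [|x]; last by apply: blk_nil; apply: gen_nil.
rewrite last_blk ?gen_nil // IH xs_last /= addSn.
by case: odd.
Qed.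

Lemma sorted_blocks (r : rel (seq nat)) (B : nat -> seq (seq nat)) l :
  (forall x, B x != [::]) -> (forall x, sorted r (B x)) ->
  sorted (fun x y => r (last [::] (B x)) (head [::] (B y))) l ->
  sorted r (flatten (map B l)).
Proof.
move=> HB Hs; elim: l => [|x l IH] //= Hl.
have IH' := IH (path_sorted Hl).
case E: (B x) (HB x) (Hs x) => [|a s] //= _ Ha.
rewrite cat_path Ha /=.
clear IH; case: l Hl IH' => [|y l] //= /andP[Hxy _].
rewrite E /= in Hxy.
case E2: (B y) (HB y) Hxy => [|c s2] //= _ Hxy /=.
by rewrite /= Hxy.
Qed.

Lemma sorted_iota (R : rel nat) a n :
  (forall y, a <= y -> y.+1 < a + n -> R y y.+1) -> sorted R (iota a n).
Proof.
elim: n a => [|n IH] a H //=.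
case: n IH H => [|n] IH H //=.
rewrite H ?leqnn; last by lia.
have := IH a.+1 => /=; apply => y Hy Hy2; apply: H; lia.
by [].
Qed.

Lemma sorted_xs (R : rel nat) b m u :
  (forall y, y.+1 <= top b m -> if odd u then R y.+1 y else R y y.+1) ->
  sorted R (xs b m u).
Proof.
move=> H; rewrite /xs; case: (odd u) H => H.
  rewrite rev_sorted; apply: sorted_iota => y _ Hy; apply: H; lia.
apply: sorted_iota => y _ Hy; apply: H; lia.
Qed.

Lemma blk_sorted (r : rel (seq nat)) x G :
  sorted (fun a c => r (x :: a) (x :: c)) G -> sorted r (blk x G).
Proof. by rewrite /blk sorted_map. Qed.

Lemma gen_colt b m u k : sorted (colt_aux u) (gen b m u k).
Proof.
elim: k m u => [|k IH] m u //=.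
apply: sorted_blocks.
- by move=> x; apply: blk_nil; apply: gen_nil.
- move=> x; apply: blk_sorted => /=; rewrite eqxx; exact: IH.
- apply: sorted_xs => y _.
  rewrite !(last_blk, head_blk) ?gen_nil //=.
  by case: odd => /=; case: ifP => [/eqP|]; lia.
Qed.

Lemma mem_blocks (B : nat -> seq (seq nat)) l a w :
  (a :: w \in flatten [seq blk x (B x) | x <- l]) = (a \in l) && (w \in B a).
Proof.
elim: l => [|x l IH] //=.
rewrite mem_cat IH in_cons.
have -> : (a :: w \in blk x (B x)) = (a == x) && (w \in B x).
  rewrite /blk; apply/mapP/andP => [[v Hv [-> ->]]|[/eqP -> Hw]]; first by rewrite eqxx.
  by exists w.
case: (eqVneq a x) => [->|ne] /=; last by [].
by case: (w \in B x); rewrite ?andbF.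
Qed.

Lemma nil_blocks (B : nat -> seq (seq nat)) l :
  ([::] \in flatten [seq blk x (B x) | x <- l]) = false.
Proof.
elim: l => [|x l IH] //=; rewrite mem_cat IH orbF.
by rewrite /blk; apply/mapP => -[].
Qed.

Lemma mem_xs b m u a : (a \in xs b m u) = (a <= top b m).
Proof. by rewrite /xs; case: odd; rewrite ?mem_rev mem_iota /=; lia. Qed.

Lemma mem_gen b m u k w : m <= b ->
  (w \in gen b m u k) = [&& size w == k, rgf_aux m w & all (fun x => x <= b) w].
Proof.
elim: k m u w => [|k IH] m u [|a w] Hm //=.
- by rewrite nil_blocks.
- rewrite mem_blocks mem_xs /top.
  case Hab: (a <= b); last by (have -> : (a <= minn m.+1 b) = false by lia); rewrite andbF; case: (size w == k) => /=; rewrite ?andbF.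
  rewrite IH; last by lia.
  rewrite eqSS. 
  have -> : (a <= minn m.+1 b) = (a <= m.+1) by lia.
  by case: (size w == k); case: (a <= m.+1).
Qed.

Fixpoint wb (n : nat) (s t : seq nat) : bool :=
  match s, t with
  | x :: s', y :: t' => if x == y then (n <= 3) && (s' == t') else wb n.+1 s' t'
  | [::], [::] => n <= 3
  | _, _ => false
  end.

Fixpoint wa (s t : seq nat) : bool :=
  match s, t with
  | x :: s', y :: t' => if x == y then wa s' t' else wb 1 s' t'
  | [::], [::] => true
  | _, _ => false
  end.

Lemma wb_same n s : wb n s s = (n <= 3).
Proof. by case: s => [|x s] //=; rewrite !eqxx andbT. Qed.

Lemma wb_sym n s t : wb n s t = wb n t s.
Proof.
elim: s n t => [|x s IH] n [|y t] //=.
by rewrite eq_sym IH; case: (y == x) => //; rewrite eq_sym.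
Qed.

Lemma wa_sym s t : wa s t = wa t s.
Proof.
elim: s t => [|x s IH] [|y t] //=.
by rewrite eq_sym IH wb_sym.
Qed.

Fixpoint pad (k : nat) (P : seq nat) : seq nat :=
  match k with 0 => [::] | k'.+1 => head 0 P :: pad k' (behead P) end.

Fixpoint okP (P1 P2 : seq nat) : bool :=
  match P1, P2 with
  | a :: P1', c :: P2' => [&& a != c, a != 0, c != 0 & okP P1' P2']
  | _, _ => all (fun x => x != 0) P1 && all (fun x => x != 0) P2
  end.

Lemma wb_pad k n P1 P2 : okP P1 P2 -> n + maxn (size P1) (size P2) <= 3 ->
  wb n (pad k P1) (pad k P2).
Proof.
elim: k n P1 P2 => [|k IH] n P1 P2 /=.
  move=> _ H; case: P1 P2 H => [|a P1] [|c P2] //=; lia.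
case: P1 => [|a P1]; case: P2 => [|c P2] /=.
- move=> _ H; apply/andP; split => //; lia.
- move=> /andP[Hc H1] H2; have -> : (0 == c) = false by lia.
  apply: IH; first by rewrite /= H1.
  move: H2 => /=; lia.
- rewrite andbT => /andP[Hc H1] H2; have -> : (a == 0) = false by lia.
  apply: IH.
    by case: P1 H1 H2 => //= *; rewrite andbT.
  move: H2 => /=; lia.
- move=> /and4P[Hac _ _ H] H2; have -> : (a == c) = false by lia.
  apply: IH => //; move: H2 => /=; lia.
Qed.

Definition Pof (t : nat) : seq nat := if odd t then [:: t; t.+1] else [:: t].

Lemma F_even b m u k : ~~ odd u -> F b m u k = pad k [::].
Proof.
elim: k m u => [|k IH] m u Hu //=.
rewrite (negbTE Hu) /ev /= maxn0 addn0 IH //.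
Qed.

Lemma top_pos b m : 2 <= b -> top b m != 0.
Proof. rewrite /top; lia. Qed.

Lemma F_shape b m u k : 2 <= b -> ~~ odd b ->
  F b m u k = pad k (if odd u then Pof (top b m) else [::]).
Proof.
move=> Hb Hob; case Hu: (odd u); last by rewrite F_even ?Hu.
case: k => [|k] //=; rewrite Hu.
have Ht := top_pos m Hb.
rewrite /Pof; case Hot: (odd (top b m)) => /=.
- rewrite /ev Hot andbF addn0.
  have Htm : maxn m (top b m) = top b m.
    have : top b m != b by apply/negP => /eqP E; rewrite -E Hot in Hob.
    rewrite /top; lia.
  rewrite Htm; case: k => [|k] //=; rewrite Hu.
  have Htt : top b (top b m) = (top b m).+1.
    have : top b m != b by apply/negP => /eqP E; rewrite -E Hot in Hob.
    rewrite /top; lia.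
  rewrite Htt /ev /= Hot /= F_even //.
  by rewrite addn1 /= Hu.
- rewrite /ev Ht Hot /= F_even //.
  by rewrite addn1 /= Hu.
Qed.

Lemma size_Pof t : size (Pof t) <= 2.
Proof. by rewrite /Pof; case: odd. Qed.

Lemma okP_nil t : t != 0 -> okP (Pof t) [::] && okP [::] (Pof t).
Proof. by rewrite /Pof; case: odd => /= ->. Qed.

Lemma okP_succ t : t != 0 -> okP (Pof t) (Pof t.+1).
Proof.
rewrite /Pof /= => Ht; case: (odd t) => /=; rewrite Ht /=.
- by have -> : (t == t.+1) = false by lia.
- have -> : (t == t.+1) = false by lia. done.
Qed.

Lemma boundary b m y pa pb k : 2 <= b -> ~~ odd b -> y.+1 <= top b m ->
  wa (y :: F b (maxn m y) pa k) (y.+1 :: F b (maxn m y.+1) pb k).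
Proof.
move=> Hb Hob Hy; rewrite !F_shape //=.
have -> : (y == y.+1) = false by lia.
case: (odd pa); case: (odd pb).
- case: (eqVneq (maxn m y) (maxn m y.+1)) => [->|ne]; first by rewrite wb_same.
  have Em : maxn m y = m by move: ne Hy; rewrite /top; lia.
  have Em' : maxn m y.+1 = m.+1 by move: ne Hy; rewrite /top; lia.
  rewrite Em Em'.
  have Et : top b m = m.+1 by move: ne Hy; rewrite /top; lia.
  case: (eqVneq b m.+1) => [Eb|nb].
    have -> : top b m.+1 = top b m by rewrite /top; lia.
    by rewrite wb_same.
  have -> : top b m.+1 = (top b m).+1 by move: nb ne Hy; rewrite /top; lia.
  apply: wb_pad; first by apply: okP_succ; apply: top_pos.
  have := size_Pof (top b m); have := size_Pof (top b m).+1; lia.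
- apply: wb_pad; first by case/andP: (okP_nil (top_pos (maxn m y) Hb)).
  have := size_Pof (top b (maxn m y)); rewrite /=; lia.
- apply: wb_pad; first by case/andP: (okP_nil (top_pos (maxn m y.+1) Hb)).
  have := size_Pof (top b (maxn m y.+1)); rewrite /=; lia.
- by rewrite wb_same.
Qed.

Lemma gen_gray b m u k : 2 <= b -> ~~ odd b -> sorted wa (gen b m u k).
Proof.
move=> Hb Hob; elim: k m u => [|k IH] m u //=.
apply: sorted_blocks.
- by move=> x; apply: blk_nil; apply: gen_nil.
- move=> x; apply: blk_sorted => /=; rewrite eqxx; exact: IH.
- apply: sorted_xs => y Hy.
  rewrite !(last_blk, head_blk) ?gen_nil // !gen_head !gen_last.
  case: odd; last exact: boundary.
  rewrite wa_sym; exact: boundary.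
Qed.

Lemma map_S_iota j c : map S (iota j c) = iota j.+1 c.
Proof. by elim: c j => [|c IH] j //=; rewrite IH. Qed.

Lemma diff_pos_cons x y s t :
  diff_pos (x :: s) (y :: t) =
  if x != y then 0 :: map S (diff_pos s t) else map S (diff_pos s t).
Proof.
rewrite /diff_pos /= maxnSS /= -map_S_iota filter_map.
by case: (x != y).
Qed.

Lemma diff_pos_same s : diff_pos s s = [::].
Proof. by elim: s => [|x s IH] //; rewrite diff_pos_cons eqxx IH. Qed.

Lemma wb_diff n s t : wb n s t -> exists c, diff_pos s t = iota 0 c /\ n + c <= 3.
Proof.
elim: s n t => [|x s IH] n [|y t] //=.
- by move=> H; exists 0; split => //; lia.
- rewrite diff_pos_cons; case: (eqVneq x y) => [E0|ne] /=; [subst y|].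
    move=> /andP[H /eqP <-]; exists 0; rewrite diff_pos_same; split => //; lia.
  move=> /IH [c [E H]]; exists c.+1; rewrite E map_S_iota; split => //; lia.
Qed.

Lemma wa_diff s t : wa s t -> exists j c, diff_pos s t = iota j c /\ c <= 3.
Proof.
elim: s t => [|x s IH] [|y t] //=.
- by move=> _; exists 0, 0.
- rewrite diff_pos_cons; case: (eqVneq x y) => [E0|ne] /=; [subst y|].
    by move=> /IH [j [c [E H]]]; exists j.+1, c; rewrite E map_S_iota.
  move=> /wb_diff [c [E H]]; exists 0, c.+1; rewrite E map_S_iota; split => //; lia.
Qed.

Lemma wa_step s t : wa s t -> d_adjacent_step 3 s t.
Proof.
move=> /wa_diff [j [c [E H]]]; rewrite /d_adjacent_step E size_iota H /=.
by case: c {E H} => [|c] //=.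
Qed.

Lemma all_words_uniq m n : uniq (all_words m n).
Proof.
elim: n => [|n IH] //.
apply: allpairs_uniq => //; first exact: iota_uniq.
by move=> [a w] [a' w'] _ _ /= [-> ->].
Qed.

Lemma mem_all_words M m (w : seq nat) :
  (w \in all_words M m) = (size w == m) && all (fun x => x < M) w.
Proof.
elim: m w => [|m IH] [|a w] //.
  by apply/allpairsP => -[[a w] []].
apply/allpairsP/andP => [[[a' w'] /= [Ha Hw [-> ->]]]|[Hs /andP[Ha Hw]]].
  move: Ha Hw; rewrite mem_iota IH => Ha /andP[H1 H2]; rewrite H2 andbT; split => //.
exists (a, w); split => //=.
  rewrite mem_iota; lia.
rewrite IH; apply/andP; split; [exact: Hs | exact: Hw].
Qed.

Lemma coRGC_eq n b : 2 <= b ->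
  coRGC_list n.+1 b = map (cons 0) (gen b 0 0 n).
Proof.
move=> Hb; rewrite /coRGC_list.
have HG := gen_colt b 0 0 n.
apply: (sorted_eq cole_trans cole_anti).
- apply: (@sort_sorted_in _ (fun s => size s == n.+1)).
    move=> s t Hs Ht; rewrite /cole; case: (eqVneq s t) => [->|ne] /=; first by rewrite ?eqxx ?orbT.
    apply: colt_total => //; move: Hs Ht; rewrite !unfold_in /= => /eqP -> /eqP ->.
    done.
  by apply/allP => s; rewrite mem_filter => /andP[/and3P[]].
- rewrite sorted_map; apply: sub_sorted HG => s t /= H.
  by apply/orP; right; exact: H.
- rewrite perm_sort; apply: uniq_perm.
  + rewrite filter_uniq //.
    exact: all_words_uniq.
  + rewrite map_inj_uniq; last by move=> s t [].
    have Htr : transitive (colt_aux 0) by move=> y x z; apply: colt_trans.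
    apply: (sorted_uniq Htr _ HG).
    by move=> s; rewrite colt_irr.
  + move=> s; rewrite mem_filter.
    case: s => [|x s].
      have -> : in_Rnb n.+1 b [::] = false by [].
      by apply/esym/mapP => -[].
    have -> : (x :: s \in [seq 0 :: w | w <- gen b 0 0 n]) = (x == 0) && (s \in gen b 0 0 n).
      apply/mapP/andP => [[w Hw [-> ->]]|[/eqP -> Hw]] //; by exists s.
    rewrite mem_gen //.
    have Hmem := @mem_all_words b.+1.
    rewrite Hmem /in_Rnb /=.
    have -> : all (fun x => x < b.+1) s = all (fun x => x <= b) s by [].
    rewrite eqSS ltnS; case: (eqVneq x 0) => [->|nx].
      by case: (size s == n); case: rgf_aux; case: all.
    by rewrite /= andbF.
Qed.

Theorem theorem2 (n b : nat) :
  1 <= n -> 2 <= b -> ~~ odd b -> d_adjacent_gray 3 (coRGC_list n b).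
Proof.
case: n => [|n] // _ Hb Hob.
rewrite coRGC_eq //.
have H : sorted wa (map (cons 0) (gen b 0 0 n)).
  by rewrite sorted_map; apply: sub_sorted (gen_gray 0 0 n Hb Hob) => s t /= H0; exact: H0.
move=> i Hi; apply: wa_step; exact: (sortedP [::] H i Hi).
Qed.
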